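(* In the binary model with $\lambda=g=\frac{\sqrt5-1}{2}$, the support $S$ of $\mu$ is almost surely totally disconnected.
   Context: Binary model. Let $T=\{1,2\}^*$ be the set of finite words over $\{1,2\}$ (the rooted binary tree; $v|j$ is the prefix of $v$ of length $j$). Let $\{a_v\}_{v\in T,\,|v|\ge1}$ be i.i.d. random variables with $\mathbb{P}(a_v=0)=\mathbb{P}(a_v=1)=\frac12$. Fix $\lambda\in(0,1)$. For $\omega\in\{1,2\}^{\mathbb{N}}$ put $f(\omega)=\sum_{j\ge1}a_{\omega|j}\lambda^j$. Let $\mu$ be the image under $f$ of the uniform product measure on $\{1,2\}^{\mathbb{N}}$, and $S=f(\{1,2\}^{\mathbb{N}})$ its (random, compact) support. *)

(* Defs.v *)
From HB Require Import structures.
From mathcomp Require Import all_boot all_order all_algebra.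
From mathcomp Require Import all_classical all_reals all_analysis.
Set Implicit Arguments. Unset Strict Implicit. Unset Printing Implicit Defensive.
Import Order.TTheory GRing.Theory Num.Theory.
Import numFieldNormedType.Exports.
Local Open Scope classical_set_scope.
Local Open Scope ring_scope.

(* Words over {1,2} are encoded as words over bool (1 ~ false, 2 ~ true).
   Finite words: seq bool; infinite words: nat -> bool. *)

Definition prefix (w : nat -> bool) (j : nat) : seq bool := mkseq w j.

Definition coding {R : realType} (a : seq bool -> bool) (lam : R)
  (w : nat -> bool) : R :=
  limn (fun n => \sum_(1 <= j < n) (a (prefix w j))%:R * lam ^+ j).

Definition supp_S {R : realType} (a : seq bool -> bool) (lam : R) : set R :=
  range (coding a lam).

Definition gold {R : realType} : R := (Num.sqrt 5 - 1) / 2.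

(* The family (a_v)_{|v|>=1} of random labels is i.i.d. with
   P(a_v = 0) = P(a_v = 1) = 1/2: each event {a_v = 1} is measurable and
   the joint law of every finite subfamily of distinct (nonempty) words is
   uniform, i.e. P(a_v = b_v for all v in s) = (1/2)^|s|. *)
Definition iid_fair_labels {d : measure_display} {T : measurableType d}
  {R : realType} (P : probability T R) (a : seq bool -> T -> bool) : Prop :=
  (forall v, measurable [set x | a v x]) /\
  (forall (s : seq (seq bool)) (b : seq bool -> bool),
     uniq s -> all (fun v => v != [::]) s ->
     P [set x | forall v, v \in s -> a v x = b v] = ((1/2) ^+ size s)%:E).

(* Main.v *)
Require Import Defs.
From HB Require Import structures.
From mathcomp Require Import all_boot all_order all_algebra.
From mathcomp Require Import all_classical all_reals all_analysis.
From mathcomp Require Import zify ring lra.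
Import Order.TTheory GRing.Theory Num.Theory.
Import numFieldNormedType.Exports.
Local Open Scope classical_set_scope.
Local Open Scope ring_scope.
Set Implicit Arguments. Unset Strict Implicit. Unset Printing Implicit Defensive.
Fixpoint bseq (n : nat) : seq (seq bool) :=
  if n is n'.+1 then map (cons true) (bseq n') ++ map (cons false) (bseq n')
  else [:: [::]].
Lemma injcons (c : bool) : injective (cons c).
Proof. by move=> x y []. Qed.
Lemma mem_bseq n l : (l \in bseq n) = (size l == n).
Proof.
elim: n l => [|n IH] [|b l] //=.
- by rewrite mem_cat; apply/negbTE; rewrite negb_or; apply/andP; split;
    apply/mapP => -[].
- rewrite mem_cat eqSS -IH.
  have H1 c c' s : (c :: l \in map (cons c') s) = (c == c') && (l \in s).
    apply/mapP/andP => [[y ys [-> ->]]|[/eqP -> ls]]; first by [].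
    by exists l.
  by rewrite !H1; case: b; rewrite /= ?orbF.
Qed.
Lemma size_bseq n : size (bseq n) = (2 ^ n)%N.
Proof. by elim: n => //= n IH; rewrite size_cat !size_map IH expnS mul2n addnn. Qed.

Lemma count_bseq_split (F1 F2 : pred (seq bool)) n1 n2 :
  count (fun l => F1 (take n1 l) && F2 (drop n1 l)) (bseq (n1 + n2)) =
  (count F1 (bseq n1) * count F2 (bseq n2))%N.
Proof.
elim: n1 F1 => [|n1 IH] F1 /=.
- rewrite add0n addn0.
  under eq_count => l do rewrite take0 drop0.
  case: (F1 [::]) => /=.
  + by rewrite mul1n.
  + by rewrite mul0n; elim: (bseq n2) => //= ? ? ->.
- rewrite /= !count_cat !count_map mulnDl.
  by rewrite -(IH (fun l => F1 (true :: l))) -(IH (fun l => F1 (false :: l))).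
Qed.

Lemma count_bseq_neg (F : pred (seq bool)) n :
  count (predC F) (bseq n) = (2 ^ n - count F (bseq n))%N.
Proof. by rewrite -(size_bseq n) -(count_predC F (bseq n)) addKn. Qed.
Section Prob.
Variables (d : measure_display) (T : measurableType d) (R : realType)
  (P : probability T R) (a : seq bool -> T -> bool).
Hypothesis Ha : iid_fair_labels P a.

Definition mv (x : T) (s : seq (seq bool)) := map (fun v => a v x) s.
Definition cyl s l := [set x | mv x s = l].
Definition goodl (s : seq (seq bool)) := uniq s && all (fun v => v != [::]) s.

Lemma lab_meas v c : measurable [set x | a v x = c].
Proof.
case: c.
- by have := Ha.1 v; congr measurable; apply/seteqP; split => x /=.
- have -> : [set x | a v x = false] = ~` [set x | a v x].
    by apply/seteqP; split => x /=; case: (a v x).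
  by apply: measurableC; exact: Ha.1.
Qed.

Lemma cyl_meas s l : measurable (cyl s l).
Proof.
elim: s l => [|v s IH] [|c l].
- by have -> : cyl [::] [::] = setT by apply/seteqP; split.
- by have -> : cyl [::] (c :: l) = set0 by apply/seteqP; split.
- by have -> : cyl (v :: s) [::] = set0 by apply/seteqP; split.
- have -> : cyl (v :: s) (c :: l) = [set x | a v x = c] `&` cyl s l.
    apply/seteqP; split => x; rewrite /cyl /mv /=.
    - by case=> -> ->.
    - by case=> -> ->.
  by apply: measurableI; [exact: lab_meas | exact: IH].
Qed.

Lemma P_cyl s l : goodl s -> size l = size s ->
  P (cyl s l) = ((1/2) ^+ size s)%:E.
Proof.
move=> /andP[us ns] sl.
have -> : cyl s l = [set x | forall v, v \in s -> a v x = nth false l (index v s)].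
  apply/seteqP; split => x /=.
  - rewrite /cyl /mv /= => <- v vs.
    by rewrite (nth_map [::]) ?index_mem // nth_index.
  - move=> H; rewrite /cyl /mv /=; apply: (@eq_from_nth _ false).
      by rewrite size_map sl.
    move=> i; rewrite size_map => ilt.
    by rewrite (nth_map [::]) // H ?mem_nth // index_uniq.
by rewrite Ha.2.
Qed.
Lemma P_bigU s (F : pred (seq bool)) (L : seq (seq bool)) : goodl s -> uniq L ->
  all (fun l => size l == size s) L ->
  P (\big[setU/set0]_(l <- L | F l) cyl s l) =
  ((count F L)%:R * (1/2) ^+ size s)%:E.
Proof.
move=> gs; elim: L => [|l L IH] /=.
  by move=> _ _; rewrite big_nil measure0 mul0r.
move=> /andP[lL uL] /andP[/eqP sl aL].
rewrite big_cons; case: (F l) => /=; last by rewrite add0n IH.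
rewrite measureU; first last.
- rewrite -bigcup_seq_cond; apply/seteqP; split => x //=.
  move=> [cx [t /= /andP[tL _] ct]]; rewrite /cyl /= in cx ct.
  by move: lL; rewrite -cx ct tL.
- by apply: bigsetU_measurable => t _; exact: cyl_meas.
- exact: cyl_meas.
have E := P_cyl gs sl.
change ((P (cyl s l) + P (\big[setU/set0]_(j <- L | F j) cyl s j))%E = ((1 + count F L)%:R * (1 / 2) ^+ size s)%:E).
rewrite E IH // -EFinD; by congr EFin; rewrite natrD mulrDl !mul1r.
Qed.

Lemma det_eq s (F : pred (seq bool)) :
  [set x | F (mv x s)] = \big[setU/set0]_(l <- bseq (size s) | F l) cyl s l.
Proof.
rewrite -bigcup_seq_cond; apply/seteqP; split => x /=.
- move=> Fx; exists (mv x s) => //=; rewrite Fx andbT mem_bseq size_map //.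
- by move=> [t /= /andP[_ Ft]]; rewrite /cyl /= => ->.
Qed.

Lemma det_meas s (F : pred (seq bool)) : measurable [set x | F (mv x s)].
Proof.
by rewrite det_eq; apply: bigsetU_measurable => t _; exact: cyl_meas.
Qed.

Lemma P_det s (F : pred (seq bool)) : goodl s ->
  P [set x | F (mv x s)] = ((count F (bseq (size s)))%:R * (1/2) ^+ size s)%:E.
Proof.
move=> gs; rewrite det_eq P_bigU //.
- elim: (size s) => //= n IH; rewrite cat_uniq !map_inj_uniq ?IH //;
    try exact: injcons.
  by rewrite andbT; apply/hasPn => l /mapP [l' _ ->]; apply/mapP => -[].
- by apply/allP => l; rewrite mem_bseq.
Qed.
Definition Dt s (G : set T) (p : R) := exists F : pred (seq bool),
  G = [set x | F (mv x s)] /\ p = (count F (bseq (size s)))%:R * (1/2) ^+ size s.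

Lemma Dt_P s G p : goodl s -> Dt s G p -> P G = p%:E.
Proof. by move=> gs [F [-> ->]]; rewrite P_det. Qed.

Lemma Dt_meas s G p : Dt s G p -> measurable G.
Proof. by move=> [F [-> _]]; exact: det_meas. Qed.

Lemma Dt_ge0 s G p : Dt s G p -> 0 <= p.
Proof. by move=> [F [_ ->]]; rewrite mulr_ge0 // exprn_ge0. Qed.

Lemma Dt_lab v c : Dt [:: v] [set x | a v x = c] (1/2).
Proof.
exists (fun l => head false l == c); split.
  by apply/seteqP; split => x /=; [move=> ->|move/eqP].
by case: c; rewrite /= expr1 ?add0n ?addn0 ?mul1r.
Qed.

Lemma Dt_I s1 s2 G1 G2 p1 p2 : Dt s1 G1 p1 -> Dt s2 G2 p2 ->
  Dt (s1 ++ s2) (G1 `&` G2) (p1 * p2).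
Proof.
move=> [F1 [-> ->]] [F2 [-> ->]].
exists (fun l => F1 (take (size s1) l) && F2 (drop (size s1) l)); split.
  apply/seteqP; split => x /=; rewrite /mv map_cat;
  rewrite take_size_cat ?drop_size_cat ?size_map //; first by move=> [-> ->].
  by move/andP.
rewrite size_cat count_bseq_split natrM exprD; ring.
Qed.

Lemma Dt_C s G p : Dt s G p -> Dt s (~` G) (1 - p).
Proof.
move=> [F [-> ->]]; exists (predC F); split.
  by apply/seteqP; split => x /=; [move/negP|move/negP].
rewrite count_bseq_neg natrB; last by rewrite -(size_bseq (size s)) count_size.
rewrite mulrBl natrX -exprMn mul1r divff ?expr1n //.
Qed.

Fixpoint tree n (u : seq bool) : seq (seq bool) :=
  if n is n'.+1 then (rcons u false :: tree n' (rcons u false)) ++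
                     (rcons u true :: tree n' (rcons u true))
  else [::].

Lemma mem_tree n u v : v \in tree n u -> exists b w, v = u ++ b :: w.
Proof.
elim: n u => [|n IH] u //=.
rewrite -cat_cons mem_cat !inE => /orP[/orP[/eqP ->|/IH [b [w ->]]]|/orP[/eqP ->|/IH [b [w ->]]]].
- by exists false, [::]; rewrite cats1.
- by exists false, (b :: w); rewrite -cats1 -catA.
- by exists true, [::]; rewrite cats1.
- by exists true, (b :: w); rewrite -cats1 -catA.
Qed.

Lemma mem_tree1 n u b v : v \in rcons u b :: tree n (rcons u b) ->
  exists w, v = u ++ b :: w.
Proof.
rewrite inE => /orP[/eqP ->|/mem_tree [c [w ->]]].
- by exists [::]; rewrite cats1.
- by exists (c :: w); rewrite -cats1 -catA.
Qed.

Lemma goodl_tree n u : goodl (tree n u).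
Proof.
rewrite /goodl; apply/andP; split; last first.
  apply/allP => v /mem_tree [b [w ->]].
  by apply/eqP => /(congr1 size); rewrite size_cat /= addnS.
elim: n u => [|n IH] u; first by [].
have -> : tree n.+1 u = (rcons u false :: tree n (rcons u false)) ++
                     (rcons u true :: tree n (rcons u true)) by [].
rewrite cat_uniq !cons_uniq !IH !andbT; apply/and3P; split.
- apply/negP => /mem_tree [b [w /(congr1 size)]].
  by rewrite size_cat /= size_rcons; lia.
- apply/negP => /hasP [v /mem_tree1 [w ->] /mem_tree1 [w' /eqP]].
  by rewrite eqseq_cat // => /andP[_ /eqP []].
- apply/negP => /mem_tree [b [w /(congr1 size)]].
  by rewrite size_cat /= size_rcons; lia.
Qed.
Fixpoint Ev n (u : seq bool) (pi : nat -> bool) : set T :=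
  if n is n'.+1 then
    [set x | exists b, a (rcons u b) x = pi 0%N /\ Ev n' (rcons u b) (fun j => pi j.+1) x]
  else setT.

Lemma Ev_D n u pi : exists p, Dt (tree n u) (Ev n u pi) p /\ p * (n%:R + 4) <= 4.
Proof.
elim: n u pi => [|n IH] u pi.
  exists 1; split; last by rewrite add0r mul1r.
  exists predT; split; first by apply/seteqP; split.
  by rewrite /= expr0 mulr1.
have [p0 [D0 b0]] := IH (rcons u false) (fun j => pi j.+1).
have [p1 [D1 b1]] := IH (rcons u true) (fun j => pi j.+1).
have D0' := Dt_C (Dt_I (Dt_lab (rcons u false) (pi 0%N)) D0).
have D1' := Dt_C (Dt_I (Dt_lab (rcons u true) (pi 0%N)) D1).
have D := Dt_C (Dt_I D0' D1').
have g0 := Dt_ge0 D0; have g1 := Dt_ge0 D1.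
eexists; split.
  have -> : Ev n.+1 u pi = ~` (~` ([set x | a (rcons u false) x = pi 0%N] `&`
        Ev n (rcons u false) (fun j => pi j.+1)) `&`
      ~` ([set x | a (rcons u true) x = pi 0%N] `&`
        Ev n (rcons u true) (fun j => pi j.+1))).
    rewrite setCI !setCK; apply/seteqP; split => x /=.
    - by move=> [[] [H1 H2]]; [right|left].
    - by move=> [[H1 H2]|[H1 H2]]; [exists false|exists true].
  exact: D.
set m := n%:R in b0 b1 *.
have m0 : 0 <= m by rewrite /m ler0n.
rewrite -[n.+1]addn1 natrD -/m.
set be := 4 / (m + 4).
have hb : be * (m + 4) = 4.
  by rewrite /be divfK //; apply: lt0r_neq0; lra.
have be0 : 0 <= be by rewrite /be divr_ge0 //; lra.
have hp0 : p0 <= be by rewrite /be ler_pdivlMr; lra.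
have hp1 : p1 <= be by rewrite /be ler_pdivlMr; lra.
have be1 : be <= 1 by nra.
have h1 : 1 - (1 - 1/2 * p0) * (1 - 1/2 * p1) <= be - be^+2/4 by nra.
have h2 : (be - be^+2/4) * (m + 1 + 4) <= 4 by nra.
apply: le_trans h2; apply: ler_wpM2r => //; lra.
Qed.
Definition Nev (u : seq bool) (pi : nat -> bool) : set T :=
  [set x | exists w : nat -> bool, Defs.prefix w (size u) = u /\
     forall j, a (Defs.prefix w (size u + j.+1)) x = pi j].

Lemma Nev_Ev n u pi : Nev u pi `<=` Ev n u pi.
Proof.
elim: n u pi => [|n IH] u pi x; first by [].
rewrite /Nev /= => -[w [wu wa]].
have e : rcons u (w (size u)) = Defs.prefix w (size u).+1.
  by rewrite /Defs.prefix mkseqS -/(Defs.prefix w (size u)) wu.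
exists (w (size u)); split.
  by rewrite e -addn1 (wa 0%N).
apply: IH; exists w; split.
  by rewrite size_rcons e.
by move=> j; rewrite size_rcons -(wa j.+1) addSnnS.
Qed.

Lemma Nev_negl u pi : P.-negligible (Nev u pi).
Proof.
have mB : measurable (\bigcap_i Ev i u pi).
  apply: bigcapT_measurable => n.
  by have [p [D _]] := Ev_D n u pi; exact: Dt_meas D.
exists (\bigcap_i Ev i u pi); split => //; last first.
  by apply: sub_bigcap => n _; exact: Nev_Ev.
have le n : (P (\bigcap_i Ev i u pi) <= (4 / (n%:R + 4))%:E)%E.
  have [p [D hp]] := Ev_D n u pi.
  apply: (@le_trans _ _ (P (Ev n u pi))).
    apply: le_measure; rewrite ?inE //; first exact: Dt_meas D.
    by apply: bigcap_inf.
  by rewrite (Dt_P (goodl_tree n u) D) lee_fin ler_pdivlMr //.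
apply/eqP; rewrite eq_le measure_ge0 andbT.
have := le 0%N; move: (P _) (le) => y.
case: y => [r| |] // H _; rewrite lee_fin.
rewrite leNgt; apply/negP => r0.
have := archi_boundP (ltW (divr_gt0 (ltr0Sn R 3) r0)).
set k := Num.Def.archi_bound _ => hk.
have := H k; rewrite lee_fin ler_pdivlMr; last by have := ler0n R k; lra.
rewrite ltr_pdivrMr // in hk.
have := ler0n R k; nra.
Qed.
End Prob.
Section Gold.
Variable R : realType.
Local Notation g := (gold : R).

Lemma g_sq : g ^+ 2 = 1 - g.
Proof.
have h := @sqr_sqrtr R 5 (ler0n _ 5).
rewrite /gold; set s := Num.sqrt 5 in h *.
by rewrite expr2 in h *; nra.
Qed.

Lemma g_bnd : 618 / 1000 < g < 619 / 1000.
Proof.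
have h := @sqr_sqrtr R 5 (ler0n _ 5).
have s0 := @sqrtr_ge0 R 5.
rewrite /gold; set s := Num.sqrt 5 in h s0 *.
rewrite expr2 in h.
apply/andP; split; nra.
Qed.

Definition VV (x y : int) : Prop :=
  [/\ (0 <= y -> 0 <= 1000 * x + 619 * y), (y < 0 -> 0 <= 1000 * x + 618 * y),
      (1 <= y -> 1000 * (x - 1) + 618 * (y - 1) <= 0) &
      (y < 1 -> 1000 * (x - 1) + 619 * (y - 1) <= 0)]%R.

Lemma VV_of (x y : int) : 0 <= x%:~R + y%:~R * g :> R -> x%:~R + y%:~R * g <= 1 + g ->
  VV x y.
Proof.
move=> h1 h2; have /andP[gl gu] := g_bnd.
split => hy.
- rewrite -(ler0z R) rmorphD !rmorphM /=.
  have : (0:R) <= y%:~R by rewrite ler0z.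
  by nra.
- rewrite -(ler0z R) rmorphD !rmorphM /=.
  have : (y%:~R : R) < 0 by rewrite ltrz0.
  by nra.
- rewrite -(lerz0 R) rmorphD !rmorphM !rmorphB /=.
  have : (1:R) <= y%:~R by rewrite ler1z.
  by nra.
- rewrite -(lerz0 R) rmorphD !rmorphM !rmorphB /=.
  have : (y%:~R : R) < 1 by rewrite ltrz1.
  by nra.
Qed.
End Gold.

Definition pat (c p : bool) (j : nat) : bool := c (+) (p && odd j).
Definition inA (x y : int) := (0 <= x <= 1) && (0 <= y <= 1).

Lemma step_pot (x y : int) (b : bool) : VV x y -> VV (x + y - b%:Z) x -> ~~ inA x y ->
  (absz (x + y - b%:Z)%R < absz y)%N.
Proof.
rewrite /inA; case: b => -[h1 h2 h3 h4] [h5 h6 h7 h8] /=; lia.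
Qed.

Lemma step_A (x y : int) (b : bool) : VV (x + y - b%:Z) x -> inA x y ->
  inA (x + y - b%:Z) x /\ (x = y -> b%:Z = x) /\ (x != y -> x + y - b%:Z != x -> b%:Z = x /\ x + y - b%:Z = y).
Proof.
rewrite /inA; case: b => -[h5 h6 h7 h8] /= /andP[/andP[? ?] /andP[? ?]]; split; try lia.
Qed.
Section Path.
Variables (R : realType) (al : seq bool -> bool) (w : nat -> bool).
Local Notation g := (gold : R).

Lemma g_pos : 0 < g. Proof. by have /andP[h _] := g_bnd R; lra. Qed.
Lemma g_lt1 : g < 1. Proof. by have /andP[_ h] := g_bnd R; lra. Qed.

Definition tm (j : nat) : R := (al (Defs.prefix w j))%:R * g ^+ j.
Definition ps (n : nat) : R := \sum_(1 <= j < n) tm j.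

Lemma tm_ge0 j : 0 <= tm j.
Proof. by rewrite /tm mulr_ge0 // exprn_ge0 // ltW // g_pos. Qed.

Lemma tm_le j : tm j <= g ^+ j.
Proof.
rewrite /tm; case: (al _) => /=; first by rewrite mul1r.
by rewrite mul0r exprn_ge0 // ltW // g_pos.
Qed.

Lemma geo m n : (m <= n)%N -> g ^+ 2 * \sum_(m <= j < n) g ^+ j = g ^+ m - g ^+ n.
Proof.
elim: n => [|n IH]; first by rewrite leqn0 => /eqP ->; rewrite big_geq // mulr0 subrr.
rewrite leq_eqVlt => /orP[/eqP <-|]; first by rewrite big_geq // mulr0 subrr.
rewrite ltnS => mn; rewrite big_nat_recr //= mulrDr IH // g_sq exprS; ring.
Qed.

Lemma ps_diff m n : (1 <= m)%N -> (m <= n)%N ->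
  0 <= ps n - ps m /\ g ^+ 2 * (ps n - ps m) <= g ^+ m.
Proof.
move=> m1 mn; rewrite /ps (big_cat_nat m1 mn) /= addrC addrK; split.
  by apply: sumr_ge0 => j _; exact: tm_ge0.
apply: (@le_trans _ _ (g ^+ 2 * \sum_(m <= j < n) g ^+ j)).
  apply: ler_wpM2l; first by rewrite exprn_ge0 // ltW // g_pos.
  by apply: ler_sum => j _; exact: tm_le.
by rewrite geo // lerBlDr lerDl exprn_ge0 // ltW // g_pos.
Qed.

Lemma ps0 : ps 0 = 0. Proof. by rewrite /ps big_geq. Qed.
Lemma ps1 : ps 1 = 0. Proof. by rewrite /ps big_geq. Qed.

Lemma ps_homo : {homo ps : m n / (m <= n)%N >-> m <= n}.
Proof.
move=> m n mn; case: m mn => [|m] mn.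
  by rewrite ps0 /ps; apply: sumr_ge0 => j _; exact: tm_ge0.
by have [h _] := ps_diff (ltn0Sn m) mn; rewrite subr_ge0 in h.
Qed.

Lemma ps_ub n : ps n <= 1 + g.
Proof.
have := g_sq R; have := g_pos.
case: n => [|n]; first by rewrite ps0; lra.
have [_ h] := ps_diff (leqnn 1) (ltn0Sn n); rewrite ps1 subr0 expr1 g_sq in h.
have := g_lt1; nra.
Qed.

Lemma ps_cvg : cvgn ps.
Proof.
apply: nondecreasing_is_cvgn; first exact: ps_homo.
by exists (1 + g) => _ [n _ <-]; exact: ps_ub.
Qed.

Lemma coding_bnd m : (1 <= m)%N ->
  ps m <= coding al g w /\ g ^+ 2 * (coding al g w - ps m) <= g ^+ m.
Proof.
move=> m1; have -> : coding al g w = limn ps by [].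
split; first exact: nondecreasing_cvgn_le ps_homo ps_cvg m.
have g2 : 0 < g ^+ 2 by rewrite exprn_gt0 // g_pos.
rewrite -ler_pdivlMl // lerBlDr.
apply: limr_le; first exact: ps_cvg.
apply: nearW => n; case: (leqP m n) => mn.
  have [_ h] := ps_diff m1 mn; rewrite -ler_pdivlMl // lerBlDr in h; exact: h.
have := ps_homo (ltnW mn).
have : 0 <= g ^+ m / g ^+ 2 by rewrite divr_ge0 // ?exprn_ge0 // ltW // g_pos.
lra.
Qed.
End Path.
Section Dyn.
Variables (R : realType) (al : seq bool -> bool) (w : nat -> bool) (x0 y0 : int).
Local Notation g := (gold : R).
Hypothesis hz : coding al g w = x0%:~R + y0%:~R * g.

Definition lb (k : nat) : bool := al (Defs.prefix w k.+1).

Fixpoint st (k : nat) : int * int :=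
  if k is k'.+1 then ((st k').1 + (st k').2 - (lb k')%:Z, (st k').1) else (x0, y0).

Lemma st_res k : coding al g w - ps R al w k.+1 = g ^+ k * ((st k).1%:~R + (st k).2%:~R * g).
Proof.
elim: k => [|k IH]; first by rewrite ps1 subr0 expr0 mul1r hz.
have -> : ps R al w k.+2 = ps R al w k.+1 + tm R al w k.+1.
  by rewrite /ps big_nat_recr.
rewrite opprD addrA IH /tm /= -/(lb k).
set x := (st k).1; set y := (st k).2.
rewrite !rmorphB !rmorphD /=.
have e : g * g = 1 - g by rewrite -expr2 (g_sq R).
apply/eqP; rewrite -subr_eq0; apply/eqP.
have -> : g ^+ k * (x%:~R + y%:~R * g) - (lb k)%:R * g ^+ k.+1 -
  g ^+ k.+1 * (x%:~R + y%:~R - ((lb k)%:Z)%:~R + x%:~R * g) =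
  (g * g - (1 - g)) * (- (g ^+ k * x%:~R)) + g ^+ k.+1 * (((lb k)%:Z)%:~R - (lb k)%:R).
  by rewrite exprS; ring.
by rewrite e subrr mul0r add0r; case: (lb k); rewrite /= ?subrr mulr0.
Qed.

Lemma st_VV k : VV (st k).1 (st k).2.
Proof.
have [h1 h2] := coding_bnd R al w (ltn0Sn k).
have h1' : 0 <= coding al g w - ps R al w k.+1 by rewrite subr_ge0.
have gk : 0 < g ^+ k by rewrite exprn_gt0 // g_pos.
rewrite st_res in h1' h2; apply: VV_of.
- by nra.
-   have e : g * g = 1 - g by rewrite -expr2 (g_sq R).
  rewrite (exprSr g k) mulrA (mulrC (g ^+ 2)) -mulrA (ler_pM2l gk) (g_sq R) in h2.
  move: h2; clear h1'; set r := ((st k).1%:~R + _) => h2.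
  have := g_pos; have := g_lt1; nra.
Qed.
End Dyn.
Section Dyn2.
Variables (R : realType) (al : seq bool -> bool) (w : nat -> bool) (x0 y0 : int).
Local Notation g := (gold : R).
Hypothesis hz : coding al g w = x0%:~R + y0%:~R * g.
Local Notation st := (st al w x0 y0).
Local Notation lb := (lb al w).

Lemma st_S k : st k.+1 = ((st k).1 + (st k).2 - (lb k)%:Z, (st k).1). Proof. by []. Qed.

Lemma VVS k : VV ((st k).1 + (st k).2 - (lb k)%:Z) (st k).1.
Proof. exact: (st_VV hz k.+1). Qed.

Lemma reachA : exists K, inA (st K).1 (st K).2.
Proof.
pose pot k := (absz (st k).1 + absz (st k).2)%N.
suff H : forall m k, (pot k <= m)%N -> exists K, inA (st K).1 (st K).2.
  exact: (H _ 0%N (leqnn _)).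
elim=> [|m IH] k hk.
  exists k; move: hk; rewrite /pot /inA leqn0 addn_eq0 !absz_eq0.
  by move=> /andP[/eqP -> /eqP ->].
case: (boolP (inA (st k).1 (st k).2)) => hA; first by exists k.
apply: (IH k.+1).
have := step_pot (st_VV hz k) (VVS k) hA.
move: hk; rewrite /pot st_S /=; lia.
Qed.

Lemma Aclosed k : inA (st k).1 (st k).2 -> inA (st k.+1).1 (st k.+1).2.
Proof. by move=> H; have [h _] := step_A (VVS k) H. Qed.

Lemma AclosedK K j : inA (st K).1 (st K).2 -> inA (st (K + j)).1 (st (K + j)).2.
Proof. by move=> H; elim: j => [|j IH]; rewrite ?addn0 // addnS; exact: Aclosed. Qed.

Lemma path_pat : exists K c p, forall j, al (Defs.prefix w (K + j.+1)) = pat c p j.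
Proof.
have [K hK] := reachA.
case: (pselect (exists K', (K <= K')%N /\ (st K').1 = (st K').2)) => [[K' [KK' e]]|ne].
- have hA : inA (st K').1 (st K').2 by rewrite -(subnKC KK'); exact: AclosedK.
  set X := (st K').1.
  have H : forall j, (st (K' + j)).1 = X /\ (st (K' + j)).2 = X /\ (lb (K' + j))%:Z = X.
    elim=> [|j [h1 [h2 h3]]].
      rewrite addn0; split => //; split; first by rewrite -e.
      by have [_ [h _]] := step_A (VVS K') hA; apply: h.
    have hAj : inA (st (K' + j)).1 (st (K' + j)).2 by rewrite h1 h2; move: hA; rewrite -e.
    have [_ [h _]] := step_A (VVS (K' + j)) hAj.
    have hb := h (etrans h1 (esym h2)).
    rewrite addnS st_S /=; split; first by rewrite h1 h2 h3; lia.
    split; first exact: h1.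
    have hAj' : inA (st (K' + j).+1).1 (st (K' + j).+1).2 by exact: Aclosed.
    have [_ [h' _]] := step_A (VVS (K' + j).+1) hAj'.
    rewrite h'; rewrite st_S /= h1 h2 h3; lia.
  exists K', (X == 1), false => j.
  rewrite /pat andFb addbF addnS; have [_ [_ hb]] := H j.
  change (lb (K' + j) = (X == 1)).
  by case: (lb _) hb => /= <-.
- have ne' : forall k, (K <= k)%N -> (st k).1 != (st k).2.
    by move=> k Kk; apply/eqP => e; apply: ne; exists k.
  set c := ((st K).1 == 1).
  have inAk k : (K <= k)%N -> inA (st k).1 (st k).2.
    by move=> Kk; rewrite -(subnKC Kk); exact: AclosedK.
  have H : forall j, (st (K + j)).1 = (c (+) odd j)%:Z.
    elim=> [|j IH].
      rewrite addn0 /c; have := inAk K (leqnn K); rewrite /inA.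
      by case: ((st K).1 =P 1) => [-> //|]; lia.
    have hA := inAk (K + j)%N (leq_addr _ _).
    have n1 := ne' (K + j)%N (leq_addr _ _).
    have n2 := ne' (K + j).+1 (leqW (leq_addr _ _)).
    have [_ [_ h]] := step_A (VVS (K + j)) hA.
    have [_ h'] := h n1 n2.
    rewrite addnS st_S /= h' /= addbN.
    move: hA n1; rewrite /inA IH; case: (c (+) odd j) => /=; lia.
  exists K, c, true => j.
  rewrite /pat andTb addnS.
  change (lb (K + j) = c (+) odd j).
  have hA := inAk (K + j)%N (leq_addr _ _).
  have n1 := ne' (K + j)%N (leq_addr _ _).
  have n2 := ne' (K + j).+1 (leqW (leq_addr _ _)).
  have [_ [_ h]] := step_A (VVS (K + j)) hA.
  have [hb _] := h n1 n2; move: hb; rewrite H.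
  by case: (lb _); case: (c (+) odd j).
Qed.
End Dyn2.
Section Topo.
Variable R : realType.
Local Notation g := (gold : R).

Definition Zg (z : R) := exists x y : int, z = x%:~R + y%:~R * g.

Lemma powZg n : Zg (g ^+ n).
Proof.
elim: n => [|n [x [y e]]]; first by exists 1, 0; rewrite expr0 mul0r addr0.
exists y, (x - y); rewrite exprS e rmorphB /=.
have e2 : g * g = 1 - g by rewrite -expr2 (g_sq R).
apply/eqP; rewrite -subr_eq0; apply/eqP.
have -> : g * (x%:~R + y%:~R * g) - (y%:~R + (x%:~R - y%:~R) * g) =
  (g * g - (1 - g)) * y%:~R by ring.
by rewrite e2 subrr mul0r.
Qed.

Lemma gpow_small k : (k.+1)%:R * g ^+ (2 * k) <= 1.
Proof.
elim: k => [|k IH]; first by rewrite muln0 expr0 mulr1.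
have /andP[gl gu] := g_bnd R.
rewrite mulnS exprD (g_sq R).
have G0 : 0 <= g ^+ (2 * k) by rewrite exprn_ge0 // ltW // g_pos.
move: IH; rewrite -!natr1 => IH.
rewrite mulrA; apply: le_trans IH; apply: ler_wpM2r => //.
have := ler0n R k; nra.
Qed.

Lemma Zg_dense p q : p < q -> exists z, Zg z /\ p < z < q.
Proof.
move=> pq; have qp0 : 0 < q - p by rewrite subr_gt0.
set k := Num.Def.archi_bound (q - p)^-1.
have hk : (q - p)^-1 < k%:R by apply: archi_boundP; rewrite invr_ge0 ltW.
set h := g ^+ (2 * k).
have h0 : 0 < h by rewrite exprn_gt0 // g_pos.
have hs := gpow_small k; rewrite -/h in hs.
have hq : h < q - p.
  rewrite -natr1 in hs.
  have hk' : 1 < k%:R * (q - p).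
    have iv : (q - p)^-1 * (q - p) = 1 by rewrite mulVf // gt_eqF.
    by nra.
  have := ler0n R k; nra.
have [X [Y eh]] := powZg (2 * k).
set m := Num.Def.floor (p / h) + 1.
exists (m%:~R * h); split.
  by exists (m * X), (m * Y); rewrite /h eh !rmorphM /=; ring.
have f1 := floor_le (p / h).
have f2 := floorD1_gt (p / h).
rewrite -/m in f2.
rewrite ltr_pdivrMr // in f2; rewrite ler_pdivlMr // in f1.
have em : (m%:~R : R) = (Num.Def.floor (p / h))%:~R + 1 by rewrite /m rmorphD.
apply/andP; split; first by [].
rewrite em mulrDl mul1r; lra.
Qed.

Lemma td_of_noZg (S : set R) : (forall z, Zg z -> ~ S z) -> totally_disconnected S.
Proof.
move=> nZ x Sx; apply/seteqP; split => y; last first.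
  by move=> ->; exact: connected_component_refl.
case=> C [Cx CS cC] Cy.
have iC := (connected_intervalP C).1 cC.
case: (ltgtP x y) => [xy|yx|->//].
- have [z [Zz /andP[xz zy]]] := Zg_dense xy.
  by exfalso; apply: (nZ z Zz); apply: CS; apply: (iC x y Cx Cy); rewrite !ltW.
- have [z [Zz /andP[yz zx]]] := Zg_dense yx.
  by exfalso; apply: (nZ z Zz); apply: CS; apply: (iC y x Cy Cx); rewrite !ltW.
Qed.
End Topo.
Lemma det_main (R : realType) (al : seq bool -> bool) :
  (forall u c p, ~ exists w, Defs.prefix w (size u) = u /\
      forall j, al (Defs.prefix w (size u + j.+1)) = pat c p j) ->
  totally_disconnected (supp_S al (gold : R)).
Proof.
move=> H; apply: td_of_noZg => z [x0 [y0 ->]] [w _ hw].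
have [K [c [p hp]]] := path_pat hw.
apply: (H (Defs.prefix w K) c p); exists w.
by rewrite /Defs.prefix size_mkseq; split.
Qed.

Unset Implicit Arguments.

Theorem corollary1p6 (d : measure_display) (T : measurableType d)
  (R : realType) (P : probability T R) (a : seq bool -> T -> bool) :
  iid_fair_labels P a ->
  {ae P, forall x, totally_disconnected (supp_S (fun v => a v x) (gold : R))}.
Proof.
move=> Ha.
pose Bad := \bigcup_k (if unpickle k is Some u then
   (Nev a u (pat false false) `|` Nev a u (pat false true)) `|`
   (Nev a u (pat true false) `|` Nev a u (pat true true)) else set0).
have nB : P.-negligible Bad.
  apply: negligible_bigcup => k.
  by apply: negligibleU; apply: negligibleU; apply: Nev_negl.
apply: negligibleS nB => x /= ntd.
apply: contrapT => nBx; apply: ntd; apply: det_main => u c p [w [wu wa]].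
apply: nBx; exists (pickle u) => //; rewrite pickleK.
by move: wa; case: c; case: p => wa; [right; right|right; left|left; right|left; left];
  exists w; split.
Qed.
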